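(* There exist a tree $\Gamma$ as described, coefficients $\lambda_x>0$, $\beta_x\in\mathbb R$ ($x\in\Gamma$), and a real number $t$ such that the only function $v:\Gamma\to\mathbb C$ satisfying $(Jv)(x)=tv(x)$ for all $x\in\Gamma$ is $v\equiv0$.
   Context: A tree $\Gamma$ ''as described'' is an infinite connected tree whose vertices are arranged in levels $\ell(x)\in\{0,1,2,\dots\}$: every vertex $x$ is adjacent to exactly one vertex $x'$ with $\ell(x')=\ell(x)+1$; for $\ell(x)\ge 1$ the set $N_x=\{y:\ y'=x\}$ of neighbours of $x$ on level $\ell(x)-1$ is finite and nonempty; $N_x=\emptyset$ if $\ell(x)=0$; there are no other edges. Given $\lambda_x>0$, $\beta_x\in\mathbb R$, the Jacobi matrix $J$ acts on functions $v:\Gamma\to\mathbb C$ by $(Jv)(x)=\lambda_x v(x')+\beta_x v(x)+\sum_{y\in N_x}\lambda_y v(y)$. *)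

(* Defs.v *)
From Stdlib Require Import Reals List.
Open Scope R_scope.

Record Cplx : Type := mkC { Cre : R; Cim : R }.

Definition C0 : Cplx := mkC 0 0.
Definition Cadd (a b : Cplx) : Cplx := mkC (Cre a + Cre b) (Cim a + Cim b).
Definition Crmul (r : R) (a : Cplx) : Cplx := mkC (r * Cre a) (r * Cim a).

(* A tree "as described": vertices V, level function, the upper neighbour
   x' = par x, and the list ch x enumerating (without repetition) the finite
   set N_x = { y | y' = x }.  Edges are exactly {x, par x}. *)
Definition is_level_tree (V : Type) (level : V -> nat) (par : V -> V)
  (ch : V -> list V) : Prop :=
  (forall l : list V, exists x, ~ In x l) /\
  (* connected: any two vertices have a common ancestor *)
  (forall x y : V, exists n m : nat, Nat.iter n par x = Nat.iter m par y) /\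
  (forall x, level (par x) = S (level x)) /\
  (forall x y, In y (ch x) <-> par y = x) /\
  (forall x, NoDup (ch x)) /\
  (forall x, (1 <= level x)%nat -> ch x <> nil) /\
  (forall x, level x = 0%nat -> ch x = nil).

Definition Jop (V : Type) (par : V -> V) (ch : V -> list V)
  (lam beta : V -> R) (v : V -> Cplx) (x : V) : Cplx :=
  Cadd (Cadd (Crmul (lam x) (v (par x))) (Crmul (beta x) (v x)))
       (fold_right (fun y acc => Cadd (Crmul (lam y) (v y)) acc) C0 (ch x)).

(* Main.v *)
Require Import Defs.
From Stdlib Require Import Reals List Lra Lia.
Open Scope R_scope.

Inductive VV : Type := Sp (n : nat) | Cc (j k : nat).

Definition lvl (x : VV) : nat := match x with Sp n => n | Cc _ k => k end.
Definition parV (x : VV) : VV :=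
  match x with
  | Sp n => Sp (S n)
  | Cc 0 k => Sp (S k)
  | Cc (S j) k => Cc j (S k)
  end.
Definition chV (x : VV) : list VV :=
  match x with
  | Sp 0 => nil
  | Sp (S n) => Sp n :: Cc 0 n :: nil
  | Cc _ 0 => nil
  | Cc j (S k) => Cc (S j) k :: nil
  end.
Definition lamV (x : VV) : R := 1.
Definition betaV (x : VV) : R :=
  match x with
  | Sp 0 => 1
  | Sp _ => 0
  | Cc 0 0 => 0
  | Cc _ 0 => -1
  | Cc 0 _ => -1
  | Cc _ _ => -2
  end.

Definition RJ (V : Type) (par : V -> V) (ch : V -> list V)
  (lam beta : V -> R) (w : V -> R) (x : V) : R :=
  lam x * w (par x) + beta x * w x +
  fold_right (fun y acc => lam y * w y + acc) 0 (ch x).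

Lemma fold_re (V : Type) (lam : V -> R) (v : V -> Cplx) (l : list V) :
  Cre (fold_right (fun y acc => Cadd (Crmul (lam y) (v y)) acc) C0 l) =
  fold_right (fun y acc => lam y * Cre (v y) + acc) 0 l.
Proof. induction l; simpl; auto. rewrite IHl; reflexivity. Qed.
Lemma fold_im (V : Type) (lam : V -> R) (v : V -> Cplx) (l : list V) :
  Cim (fold_right (fun y acc => Cadd (Crmul (lam y) (v y)) acc) C0 l) =
  fold_right (fun y acc => lam y * Cim (v y) + acc) 0 l.
Proof. induction l; simpl; auto. rewrite IHl; reflexivity. Qed.

Lemma Jre V par ch lam beta v x :
  Cre (Jop V par ch lam beta v x) = RJ V par ch lam beta (fun y => Cre (v y)) x.
Proof. unfold Jop, RJ; simpl. rewrite fold_re. reflexivity. Qed.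
Lemma Jim V par ch lam beta v x :
  Cim (Jop V par ch lam beta v x) = RJ V par ch lam beta (fun y => Cim (v y)) x.
Proof. unfold Jop, RJ; simpl. rewrite fold_im. reflexivity. Qed.

Lemma real_zero (w : VV -> R) :
  (forall x, RJ VV parV chV lamV betaV w x = 0) -> forall x, w x = 0.
Proof.
  intro H.
  assert (E : forall x, RJ VV parV chV lamV betaV w x = 0) by exact H.
  unfold RJ, lamV in E; simpl in E.
  assert (P : forall k j, w (Cc j k) = w (Cc (j + k) 0)).
  { assert (P2 : forall k, (forall j, w (Cc j k) = w (Cc (j + k) 0)) /\
                           (forall j, w (Cc j (S k)) = w (Cc (j + S k) 0))).
    { induction k as [|k [IH1 IH2]].
      - split; intro j.
        + rewrite Nat.add_0_r; reflexivity.
        + specialize (E (Cc (S j) 0)); simpl in E.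
          replace (j + 1)%nat with (S j) by lia. lra.
      - split; [exact IH2|]. intro j.
        specialize (E (Cc (S j) (S k))); simpl in E.
        rewrite IH2 in E. rewrite (IH1 (S (S j))) in E.
        replace (S j + S k)%nat with (j + S (S k))%nat in E by lia.
        replace (S (S j) + k)%nat with (j + S (S k))%nat in E by lia.
        lra. }
    intros k j. apply (proj1 (P2 k)). }
  assert (HS : forall n, w (Sp (S n)) = 0).
  { intros [|n].
    - specialize (E (Cc 0 0)); simpl in E. lra.
    - specialize (E (Cc 0 (S n))); simpl in E.
      rewrite (P (S n) 0%nat), (P n 1%nat) in E.
      replace (1 + n)%nat with (0 + S n)%nat in E by lia. lra. }
  assert (HS0 : w (Sp 0) = 0).
  { specialize (E (Sp 0)); simpl in E. rewrite (HS 0%nat) in E. lra. }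
  assert (HSa : forall n, w (Sp n) = 0) by (intros [|n]; auto).
  assert (HC : forall n, w (Cc 0 n) = 0).
  { intro n. specialize (E (Sp (S n))); simpl in E.
    rewrite !HSa in E. lra. }
  intros [n|j k]; auto.
  rewrite P. rewrite <- (HC (j + k)%nat). rewrite (P (j+k)%nat 0%nat). reflexivity.
Qed.

Lemma iter_Sp : forall m n, Nat.iter m parV (Sp n) = Sp (n + m).
Proof.
  induction m; intro n; simpl.
  - rewrite Nat.add_0_r; reflexivity.
  - rewrite IHm. simpl. f_equal. lia.
Qed.

Lemma to_spine : forall x, exists a n, Nat.iter a parV x = Sp n.
Proof.
  intros [n|j k].
  - exists 0%nat, n; reflexivity.
  - revert k. induction j; intro k.
    + exists 1%nat, (S k). reflexivity.
    + destruct (IHj (S k)) as [a [n Ha]]. exists (S a), n.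
      rewrite Nat.iter_succ_r. exact Ha.
Qed.

Lemma infinite_V : forall l : list VV, exists x, ~ In x l.
Proof.
  assert (forall l : list VV, exists n, forall m, (n <= m)%nat -> ~ In (Sp m) l).
  { induction l as [|a l [n IH]].
    - exists 0%nat. intros m _ Hm; exact Hm.
    - destruct a as [p|j k].
      + exists (Nat.max n (S p)). intros m Hm [Hin|Hin].
        * injection Hin; lia.
        * apply (IH m); [lia|exact Hin].
      + exists n. intros m Hm [Hin|Hin]; [discriminate|]. apply (IH m); auto. }
  intro l. destruct (H l) as [n Hn]. exists (Sp n). apply Hn; lia.
Qed.

Theorem proposition5 :
  exists (V : Type) (level : V -> nat) (par : V -> V) (ch : V -> list V)
         (lam beta : V -> R) (t : R),
    is_level_tree V level par ch /\
    (forall x, 0 < lam x) /\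
    (forall v : V -> Cplx,
       (forall x, Jop V par ch lam beta v x = Crmul t (v x)) ->
       forall x, v x = C0).
Proof.
  exists VV, lvl, parV, chV, lamV, betaV, 0.
  split; [|split].
  - unfold is_level_tree. split; [exact infinite_V|].
    split.
    { intros x y. destruct (to_spine x) as [a [n Ha]].
      destruct (to_spine y) as [b [m Hb]].
      exists (m + a)%nat, (n + b)%nat.
      rewrite Nat.iter_add, Ha, Nat.iter_add, Hb, !iter_Sp. f_equal. lia. }
    split.
    { intros [n|[|j] k]; reflexivity. }
    split.
    { intros x y; split.
      - destruct x as [[|n]|j [|k]]; simpl; try tauto.
        + intros [<-|[<-|[]]]; reflexivity.
        + intros [<-|[]]; reflexivity.
      - intro Hp. subst x. destruct y as [n|[|j] k]; simpl; auto. }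
    split.
    { intros [[|n]|j [|k]]; simpl; repeat constructor; simpl;
        try (intros [H|H]; [discriminate|exact H]); auto. }
    split.
    { intros [[|n]|j [|k]]; simpl; intros H; try lia; discriminate. }
    { intros [[|n]|j [|k]]; simpl; intros H; try lia; reflexivity. }
  - intro x; unfold lamV; lra.
  - intros v Hv x.
    assert (Hr : forall y, Cre (v y) = 0).
    { apply real_zero. intro y. rewrite <- Jre, (Hv y). simpl. ring. }
    assert (Hi : forall y, Cim (v y) = 0).
    { apply real_zero. intro y. rewrite <- Jim, (Hv y). simpl. ring. }
    specialize (Hr x). specialize (Hi x). destruct (v x); simpl in *.
    subst; reflexivity.
Qed.
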